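(* An undirected graph $G=(V,E)$ (finite or infinite) has at most one multiplex $M$ with $\widetilde M=V$.
   Context: A graph $G=(V,E)$ has vertex set $V$ and edge set $E\subseteq V^2$; it is undirected if $E$ is irreflexive and symmetric. Implication classes: on $E$ define $(a,b)\Gamma(a',b')$ iff either $a=a'$ and $(b,b')\notin E$, or $b=b'$ and $(a,a')\notin E$; the classes of the transitive closure $\Gamma^*$ are the implication classes. For an implication class $A$, $A^{-1}=\{(b,a):(a,b)\in A\}$ and the color class is $\widehat A=A\cup A^{-1}$. A simplex of rank $r\ge1$ is a complete sub-graph $S=(V_S,E_S)$ of $G$ on $r+1$ vertices whose distinct undirected edges lie in distinct color classes. A multiplex is a set of edges of the form $M(S)=\bigcup\{\widehat A:\widehat A\text{ a color class},\ \widehat A\cap E_S\neq\emptyset\}$ for a simplex $S$; $\widetilde M$ is the set of vertices spanned by $M$. *)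

(* Defs.v *)
From Stdlib Require Import List Relations.
Import ListNotations.

Section Graphs.
Variable V : Type.
Variable E : V -> V -> Prop.

Definition undirected : Prop :=
  (forall a, ~ E a a) /\ (forall a b, E a b -> E b a).

Definition Gamma (e f : V * V) : Prop :=
  E (fst e) (snd e) /\ E (fst f) (snd f) /\
  ((fst e = fst f /\ ~ E (snd e) (snd f)) \/
   (snd e = snd f /\ ~ E (fst e) (fst f))).

(* Gamma* : transitive closure; its classes are the implication classes. *)
Definition Gamma_star : V * V -> V * V -> Prop := clos_trans (V * V) Gamma.

(* color_class a b x y : (x,y) lies in the color class A ∪ A^{-1},
   where A is the implication class of the edge (a,b). *)
Definition color_class (a b x y : V) : Prop :=
  Gamma_star (a, b) (x, y) \/ Gamma_star (a, b) (y, x).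

(* A simplex of rank r >= 1, given by its list of r+1 distinct vertices. *)
Definition simplex (s : list V) : Prop :=
  NoDup s /\ 2 <= length s /\
  (forall x y, In x s -> In y s -> x <> y -> E x y) /\
  (forall x y u v, In x s -> In y s -> In u s -> In v s ->
     x <> y -> u <> v -> color_class x y u v ->
     (x = u /\ y = v) \/ (x = v /\ y = u)).

Definition multiplex_of (s : list V) (x y : V) : Prop :=
  exists u v, In u s /\ In v s /\ u <> v /\ color_class u v x y.

Definition is_multiplex (M : V -> V -> Prop) : Prop :=
  exists s, simplex s /\ forall x y, M x y <-> multiplex_of s x y.

Definition spanned (M : V -> V -> Prop) (z : V) : Prop :=
  exists w, M z w \/ M w z.

End Graphs.

(* Main.v *)
Require Import Defs.
From Stdlib Require Import List Relations Classical Lia.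
Import ListNotations.

Local Notation GS E e f := (Gamma_star _ E e f).



Lemma gs_edge V (E : V -> V -> Prop) e f : GS E e f -> E (fst e) (snd e) /\ E (fst f) (snd f).
Proof.
  induction 1 as [e f H|e g f _ IH1 _ IH2].
  - destruct H as [H1 [H2 _]]; auto.
  - tauto.
Qed.

Lemma gs_e1 V (E : V -> V -> Prop) a b c d : GS E (a,b) (c,d) -> E a b.
Proof. intro H; apply gs_edge in H; simpl in H; tauto. Qed.
Lemma gs_e2 V (E : V -> V -> Prop) a b c d : GS E (a,b) (c,d) -> E c d.
Proof. intro H; apply gs_edge in H; simpl in H; tauto. Qed.

Lemma gs_refl V E (HU : undirected V E) a b : E a b -> GS E (a,b) (a,b).
Proof.
  intro H. apply t_step. unfold Gamma; simpl. destruct HU as [Hi _].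
  split; [auto|split;[auto|left; split; auto]].
Qed.

Lemma gs_trans V (E : V -> V -> Prop) e f g : GS E e f -> GS E f g -> GS E e g.
Proof. intros; eapply t_trans; eauto. Qed.

Lemma gamma_sym V E (HU : undirected V E) e f : Gamma V E e f -> Gamma V E f e.
Proof.
  destruct HU as [Hi Hs].
  intros [H1 [H2 [[H3 H4]|[H3 H4]]]]; split; auto; split; auto.
  - left; split; auto.
  - right; split; auto.
Qed.

Lemma gs_sym V E (HU : undirected V E) e f : GS E e f -> GS E f e.
Proof.
  induction 1 as [e f H|e g f _ IH1 _ IH2].
  - apply t_step; apply gamma_sym; auto.
  - eapply t_trans; eauto.
Qed.

Lemma gs_rev_gen V E (HU : undirected V E) e f : GS E e f -> GS E (snd e, fst e) (snd f, fst f).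
Proof.
  destruct HU as [Hi Hs].
  induction 1 as [[a b] [c d] H|e g f _ IH1 _ IH2].
  - apply t_step. destruct H as [H1 [H2 [[H3 H4]|[H3 H4]]]]; simpl in *;
    split; auto; split; auto.
  - eapply t_trans; eauto.
Qed.

Lemma gs_rev V E (HU : undirected V E) a b c d : GS E (a,b) (c,d) -> GS E (b,a) (d,c).
Proof. intro H; apply (gs_rev_gen _ _ HU) in H; exact H. Qed.

Lemma st1 V E (HU : undirected V E) x y z : E x y -> E x z -> ~ E y z -> GS E (x,y) (x,z).
Proof. intros; apply t_step; split; auto; split; auto. Qed.

Lemma st2 V E (HU : undirected V E) x y z : E x z -> E y z -> ~ E x y -> GS E (x,z) (y,z).
Proof. intros; apply t_step; split; auto; split; auto. Qed.

Lemma TL V E (HU : undirected V E) a b c :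
  E a b -> E a c -> E b c -> ~ GS E (b,c) (b,a) -> ~ GS E (b,c) (a,c) ->
  forall x y, GS E (b,c) (x,y) ->
    E a x /\ E a y /\ GS E (a,x) (a,b) /\ GS E (a,y) (a,c).
Proof.
  intros Hab Hac Hbc N1 N2.
  pose proof HU as [Hi Hs].
  set (P := fun e : V * V => E a (fst e) /\ E a (snd e) /\ GS E (a, fst e) (a,b) /\ GS E (a, snd e) (a,c)).
  assert (K : forall e f, clos_trans _ (Gamma V E) e f -> GS E (b,c) e -> P e -> P f).
  { induction 1 as [[x1 x2] [y1 y2] H|e g f H1 IH1 H2 IH2].
    - intros Hg [P1 [P2 [P3 P4]]]. simpl in *.
      destruct H as [Ex [Ey [[Heq Hn]|[Heq Hn]]]]; simpl in *; subst.
      + assert (Eay : E a y2).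
        { destruct (classic (E a y2)) as [h|h]; auto. exfalso. apply N1.
          eapply gs_trans; [exact Hg|].
          eapply gs_trans; [apply (st1 _ _ HU y1 x2 y2); auto|].
          eapply gs_trans; [apply (st1 _ _ HU y1 y2 a); auto|].
          apply (gs_rev _ _ HU) in P3. exact P3. }
        split; [auto|split; [auto|split; [auto|]]]. simpl.
        eapply gs_trans; [|exact P4]. apply gs_sym; auto. apply st1; auto.
      + assert (Eay : E a y1).
        { destruct (classic (E a y1)) as [h|h]; auto. exfalso. apply N2.
          eapply gs_trans; [exact Hg|].
          eapply gs_trans; [apply (st2 _ _ HU x1 y1 y2); auto|].
          eapply gs_trans; [apply (st2 _ _ HU y1 a y2); auto|]. exact P4. }
        split; [auto|split; [auto|split; [|auto]]]. simpl.
        eapply gs_trans; [|exact P3]. apply gs_sym; auto. apply st1; auto.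
    - intros Hg Pe. apply IH2; [eapply t_trans; eauto|]. apply IH1; auto. }
  intros x y H. apply (K (b,c) (x,y) H).
  - apply gs_refl; auto.
  - unfold P; simpl. split; auto; split; auto; split; apply gs_refl; auto.
Qed.


Lemma sx_cc V E s (S : simplex V E s) i j m m' :
  In i s -> In j s -> In m s -> In m' s -> i <> j -> m <> m' ->
  GS E (i,j) (m,m') -> (i = m /\ j = m') \/ (i = m' /\ j = m).
Proof.
  destruct S as [_ [_ [_ C]]]. intros. apply C; auto. left; auto.
Qed.

Lemma sx_E V E s (S : simplex V E s) x y : In x s -> In y s -> x <> y -> E x y.
Proof. destruct S as [_ [_ [C _]]]. auto. Qed.

Lemma TLS V E (HU : undirected V E) s (S : simplex V E s) i j m x y :
  In i s -> In j s -> In m s -> i <> j -> m <> i -> m <> j ->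
  GS E (i,j) (x,y) ->
  E m x /\ E m y /\ GS E (m,x) (m,i) /\ GS E (m,y) (m,j).
Proof.
  intros Hi Hj Hm Hij Hmi Hmj H.
  assert (N1 : ~ GS E (i,j) (i,m)).
  { intro G. destruct (sx_cc _ _ _ S i j i m) as [[_ h]|[h _]]; auto; congruence. }
  assert (N2 : ~ GS E (i,j) (m,j)).
  { intro G. destruct (sx_cc _ _ _ S i j m j) as [[h _]|[_ h]]; auto; congruence. }
  apply (TL _ _ HU m i j); auto; apply (sx_E _ _ _ S); auto.
Qed.

Definition ty V (E : V -> V -> Prop) (s : list V) (p k : V) : Prop :=
  In k s /\ forall m, In m s -> m <> k -> E m p /\ GS E (m,p) (m,k).

Definition third V (s : list V) : Prop :=
  forall a b, In a s -> In b s -> exists m, In m s /\ m <> a /\ m <> b.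

Lemma ty_self V E (HU : undirected V E) s (S : simplex V E s) k : In k s -> ty V E s k k.
Proof.
  intro Hk; split; auto. intros m Hm Hmk. split.
  - apply (sx_E _ _ _ S); auto.
  - apply gs_refl; auto. apply (sx_E _ _ _ S); auto.
Qed.

Lemma ty_unique V E (HU : undirected V E) s (S : simplex V E s) (T : third V s) p k k' :
  ty V E s p k -> ty V E s p k' -> k = k'.
Proof.
  intros [Hk A] [Hk' B]. destruct (classic (k = k')) as [h|h]; auto. exfalso.
  destruct (T k k' Hk Hk') as [m [Hm [H1 H2]]].
  destruct (A m Hm H1) as [_ G1]. destruct (B m Hm H2) as [_ G2].
  assert (G : GS E (m,k) (m,k')) by (eapply gs_trans; [apply gs_sym; eauto|exact G2]).
  destruct (sx_cc _ _ _ S m k m k') as [[_ e]|[e _]]; auto.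
Qed.

Lemma ty_end V E (HU : undirected V E) s (S : simplex V E s) (T : third V s) i j p q :
  In i s -> In j s -> i <> j -> GS E (i,j) (p,q) -> ty V E s p i.
Proof.
  intros Hi Hj Hij G. split; auto. intros m Hm Hmi.
  destruct (classic (m = j)) as [e|e].
  - subst m. destruct (T i j Hi Hj) as [n [Hn [Hni Hnj]]].
    destruct (TLS _ _ HU s S i j n p q) as [_ [_ [G1 _]]]; auto.
    apply (gs_sym _ _ HU) in G1.
    destruct (TLS _ _ HU s S n i j n p) as [_ [E2 [_ G2]]]; auto.
  - destruct (TLS _ _ HU s S i j m p q) as [E1 [_ [G1 _]]]; auto.
Qed.

Lemma ty_end2 V E (HU : undirected V E) s (S : simplex V E s) (T : third V s) i j p q :
  In i s -> In j s -> i <> j -> GS E (i,j) (p,q) -> ty V E s q j.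
Proof.
  intros Hi Hj Hij G. apply (gs_rev _ _ HU) in G. apply (ty_end _ _ HU s S T j i q p); auto.
Qed.

Lemma diff_adj V E (HU : undirected V E) s (S : simplex V E s) (T : third V s) p q k k' :
  ty V E s p k -> ty V E s q k' -> k <> k' -> E p q.
Proof.
  intros [Hk A] [Hk' B] Hne. destruct (T k k' Hk Hk') as [m [Hm [H1 H2]]].
  destruct (A m Hm H1) as [Ep G1]. destruct (B m Hm H2) as [Eq G2].
  destruct (classic (E p q)) as [h|h]; auto. exfalso.
  assert (G : GS E (m,k) (m,k')).
  { eapply gs_trans; [apply gs_sym; eauto|]. eapply gs_trans; [|exact G2]. apply st1; auto. }
  destruct (sx_cc _ _ _ S m k m k') as [[_ e]|[e _]]; auto.
Qed.

Definition spanF V (E : V -> V -> Prop) s : Prop :=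
  forall z, exists a b w, In a s /\ In b s /\ a <> b /\ GS E (a,b) (z,w).

Lemma span_first V E (HU : undirected V E) s (M : V -> V -> Prop) :
  (forall x y, M x y <-> multiplex_of V E s x y) -> (forall z, spanned V M z) -> spanF V E s.
Proof.
  intros HM Hsp z. destruct (Hsp z) as [w [H|H]]; apply HM in H;
  destruct H as [u [v [Hu [Hv [Huv [G|G]]]]]].
  - exists u, v, w; auto.
  - apply (gs_rev _ _ HU) in G. exists v, u, w; auto.
  - apply (gs_rev _ _ HU) in G. exists v, u, w; auto.
  - exists u, v, w; auto.
Qed.

Lemma ty_exists V E (HU : undirected V E) s (S : simplex V E s) (T : third V s) :
  spanF V E s -> forall z, exists k, ty V E s z k.
Proof.
  intros Sp z. destruct (Sp z) as [a [b [w [Ha [Hb [Hab G]]]]]].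
  exists a. eapply ty_end; eauto.
Qed.

Definition same V E s x y := exists k, ty V E s x k /\ ty V E s y k.

Lemma mchar V E (HU : undirected V E) s (S : simplex V E s) (T : third V s) (Sp : spanF V E s) x y :
  multiplex_of V E s x y <-> E x y /\ ~ same V E s x y.
Proof.
  pose proof HU as [Hi Hs]. split.
  - intros [u [v [Hu [Hv [Huv [G|G]]]]]].
    + split; [eapply gs_e2; eauto|]. intros [k [A B]].
      pose proof (ty_end _ _ HU s S T u v x y Hu Hv Huv G) as A'.
      pose proof (ty_end2 _ _ HU s S T u v x y Hu Hv Huv G) as B'.
      apply Huv. rewrite <- (ty_unique _ _ HU s S T _ _ _ A A'). eapply ty_unique; eauto.
    + split; [apply Hs; eapply gs_e2; eauto|]. intros [k [A B]].
      pose proof (ty_end _ _ HU s S T u v y x Hu Hv Huv G) as A'.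
      pose proof (ty_end2 _ _ HU s S T u v y x Hu Hv Huv G) as B'.
      apply Huv. rewrite <- (ty_unique _ _ HU s S T _ _ _ B A'). exact (ty_unique _ _ HU s S T _ _ _ A B').
  - intros [Exy Ns].
    destruct (ty_exists _ _ HU s S T Sp x) as [k Tx].
    destruct (ty_exists _ _ HU s S T Sp y) as [l Ty].
    assert (Hkl : k <> l) by (intro e; subst; apply Ns; exists l; auto).
    pose proof Tx as [Hk Ax]. pose proof Ty as [Hl Ay].
    destruct (T k l Hk Hl) as [m [Hm [Hmk Hml]]].
    destruct (Ax m Hm Hmk) as [Emx Gx]. destruct (Ay m Hm Hml) as [Emy Gy].
    destruct (classic (GS E (m,y) (x,y))) as [h|h].
    + exists m, l. split; auto; split; auto; split; auto. left.
      apply (gs_trans _ _ _ (m,y)); [apply (gs_sym _ _ HU); exact Gy|exact h].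
    + assert (N1 : ~ GS E (m,y) (m,x)).
      { intro G. apply Hkl.
        assert (G' : GS E (m,l) (m,k)).
        { apply (gs_trans _ _ _ (m,y)); [apply (gs_sym _ _ HU); exact Gy|].
          apply (gs_trans _ _ _ (m,x)); auto. }
        destruct (sx_cc _ _ _ S m l m k) as [[_ e]|[e _]]; auto. congruence. }
      destruct (TL _ _ HU x m y (Hs _ _ Emx) Exy Emy N1 h m l Gy) as [_ [_ [_ G]]].
      apply (gs_rev _ _ HU) in G.
      destruct (Ax l Hl (fun e => Hkl (eq_sym e))) as [_ G2].
      exists l, k. split; auto; split; auto; split; [intro e; auto|]. right.
      apply (gs_trans _ _ _ (l,x)); [apply (gs_sym _ _ HU); exact G2|exact G].
Qed.


Lemma CC V E (HU : undirected V E) s (S : simplex V E s) (T : third V s) (Sp : spanF V E s)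
  k (X : V -> Prop) : In k s -> X k ->
  (forall p q, ty V E s p k -> ty V E s q k -> X p -> ~ X q -> E p q) ->
  forall p, ty V E s p k -> X p.
Proof.
  intros Hk Xk HX p Tp.
  destruct (T k k Hk Hk) as [m [Hm [Hmk _]]].
  set (Inv := fun e : V * V => ~ ty V E s (fst e) k /\ ty V E s (snd e) k /\ X (snd e)).
  assert (K : forall e f, clos_trans _ (Gamma V E) e f -> Inv e -> Inv f).
  { induction 1 as [[a b] [a' b'] H|e g f _ IH1 _ IH2]; [|tauto].
    intros [I1 [I2 I3]]; simpl in *.
    destruct H as [Ex [Ey [[Heq Hn]|[Heq Hn]]]]; simpl in *; subst.
    - destruct (ty_exists _ _ HU s S T Sp b') as [t Tb].
      assert (tk : t = k).
      { destruct (classic (t = k)) as [h|h]; auto. exfalso.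
        apply Hn. eapply diff_adj; eauto. }
      subst t. split; auto; split; auto.
      destruct (classic (X b')) as [h|h]; auto. exfalso. apply Hn; auto.
    - split; auto. intro Ta'.
      destruct (ty_exists _ _ HU s S T Sp a) as [t Ta].
      assert (tk : t <> k) by (intro e; subst; auto).
      apply Hn. eapply diff_adj; eauto. }
  destruct Tp as [_ Ap]. destruct (Ap m Hm Hmk) as [_ G].
  apply (gs_sym _ _ HU) in G.
  apply (K _ _ G). split; simpl.
  - intro Tm. apply Hmk. apply (ty_unique _ _ HU s S T m); auto. apply ty_self; auto.
  - split; auto. apply ty_self; auto.
Qed.

Lemma same_transfer V E (HU : undirected V E) s1 s2 (S1 : simplex V E s1) (T1 : third V s1)
  (Sp1 : spanF V E s1) (S2 : simplex V E s2) (T2 : third V s2) (Sp2 : spanF V E s2) x y :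
  same V E s1 x y -> same V E s2 x y.
Proof.
  intros [k [Tx Ty]]. pose proof Tx as [Hk _].
  destruct (ty_exists _ _ HU s2 S2 T2 Sp2 k) as [t Tk].
  assert (HX : forall p, ty V E s1 p k -> ty V E s2 p t).
  { apply (CC _ _ HU s1 S1 T1 Sp1 k (fun z => ty V E s2 z t)); auto.
    intros p q _ _ Xp Xq. destruct (ty_exists _ _ HU s2 S2 T2 Sp2 q) as [t' Tq].
    apply (diff_adj _ _ HU s2 S2 T2 p q t t'); auto. intro e; subst; auto. }
  exists t; auto.
Qed.

Definition CCl V (E : V -> V -> Prop) (e0 e1 p q : V) : Prop :=
  GS E (e0,e1) (p,q) \/ GS E (e0,e1) (q,p).

Lemma CCl_orient V E (HU : undirected V E) e0 e1 p q x y :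
  CCl V E e0 e1 p q -> CCl V E e0 e1 x y -> GS E (p,q) (x,y) \/ GS E (p,q) (y,x).
Proof.
  intros [A|A] [B|B].
  - left. eapply gs_trans; [apply gs_sym; eauto|eauto].
  - right. eapply gs_trans; [apply gs_sym; eauto|eauto].
  - right. apply (gs_rev _ _ HU). eapply gs_trans; [apply gs_sym; eauto|eauto].
  - left. apply (gs_rev _ _ HU). eapply gs_trans; [apply gs_sym; eauto|eauto].
Qed.


Lemma two_elems V E s (S : simplex V E s) : exists s0 s1, In s0 s /\ In s1 s /\ s0 <> s1.
Proof.
  destruct S as [ND [Len _]]. destruct s as [|s0 [|s1 r]]; simpl in Len; try lia.
  exists s0, s1. apply NoDup_cons_iff in ND. destruct ND as [N _].
  split; [left; auto|split; [right; left; auto|]]. intro e; subst; apply N; left; auto.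
Qed.

Lemma step1 V E (HU : undirected V E) s (S : simplex V E s) (Sp : spanF V E s) e0 e1 :
  (forall z, exists w, CCl V E e0 e1 z w) ->
  exists a b, In a s /\ In b s /\ a <> b /\ color_class V E a b e0 e1.
Proof.
  intro SpB. pose proof HU as [Hi Hs]. apply NNPP; intro H.
  assert (noS : forall a b p q, In a s -> In b s -> a <> b -> CCl V E e0 e1 p q -> ~ GS E (a,b) (p,q)).
  { intros a b p q Ha Hb Hab [C|C] G; apply H.
    - exists a, b; split; auto; split; auto; split; auto. left.
      eapply gs_trans; [exact G|apply gs_sym; auto].
    - apply (gs_rev _ _ HU) in G. exists b, a; split; auto; split; auto; split; auto. left.
      eapply gs_trans; [exact G|apply gs_sym; auto]. }
  assert (Ccl : forall p q x y, CCl V E e0 e1 p q -> GS E (p,q) (x,y) -> CCl V E e0 e1 x y).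
  { intros p q x y [C|C] G.
    - left. eapply gs_trans; eauto.
    - right. apply (gs_rev _ _ HU) in G. eapply gs_trans; eauto. }
  destruct (two_elems _ _ _ S) as [s0 [s1 [H0 [H1 H01]]]].
  destruct (SpB s0) as [z Cz].
  assert (Ez : E s0 z) by (destruct Cz as [C|C]; [eapply gs_e2; eauto|apply Hs; eapply gs_e2; eauto]).
  assert (E01 : E s0 s1) by (apply (sx_E _ _ _ S); auto).
  assert (Ez1 : E z s1).
  { destruct (classic (E z s1)) as [h|h]; auto. exfalso.
    apply (noS s0 s1 s0 z); auto. apply st1; auto. }
  assert (H1z : GS E (s0,z) (s1,z)).
  { destruct (classic (GS E (s0,z) (s1,z))) as [h|h]; auto. exfalso.
    assert (N1 : ~ GS E (s0,z) (s0,s1)).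
    { intro G. apply (noS s0 s1 s0 z); auto. apply gs_sym; auto. }
    destruct (SpB s1) as [w Cw].
    destruct (CCl_orient _ _ HU e0 e1 s0 z s1 w Cz Cw) as [G|G].
    - destruct (TL _ _ HU s1 s0 z (Hs _ _ E01) (Hs _ _ Ez1) Ez N1 h s1 w G) as [h1 _]. eapply Hi; eauto.
    - destruct (TL _ _ HU s1 s0 z (Hs _ _ E01) (Hs _ _ Ez1) Ez N1 h w s1 G) as [_ [h1 _]]. eapply Hi; eauto. }
  assert (C1z : CCl V E e0 e1 s1 z) by (eapply Ccl; eauto).
  assert (N2 : ~ GS E (s0,s1) (z,s1)).
  { intro G. apply (gs_rev _ _ HU) in G. apply (noS s1 s0 s1 z); auto. }
  assert (N1 : ~ GS E (s0,s1) (s0,z)) by (apply noS; auto).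
  pose proof (TL _ _ HU z s0 s1 (Hs _ _ Ez) Ez1 E01 N1 N2) as TLz.
  destruct (Sp z) as [a [b [w [Ha [Hb [Hab G]]]]]].
  destruct (classic (a = s0 /\ b = s1)) as [[e1' e2']|n1].
  { subst. destruct (TLz z w G) as [h _]. eapply Hi; eauto. }
  destruct (classic (a = s1 /\ b = s0)) as [[e1' e2']|n2].
  { subst. apply (gs_rev _ _ HU) in G. destruct (TLz w z G) as [_ [h _]]. eapply Hi; eauto. }
  assert (Hm : (s0 <> a /\ s0 <> b) \/ (s1 <> a /\ s1 <> b)).
  { destruct (classic (s0 = a)); destruct (classic (s0 = b));
    destruct (classic (s1 = a)); destruct (classic (s1 = b)); subst; try tauto. }
  destruct Hm as [[m1 m2]|[m1 m2]].
  - destruct (TLS _ _ HU s S a b s0 z w) as [_ [_ [G1 _]]]; auto.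
    apply (noS s0 a s0 z); auto. apply gs_sym; auto.
  - destruct (TLS _ _ HU s S a b s1 z w) as [_ [_ [G1 _]]]; auto.
    apply (noS s1 a s1 z); auto. apply gs_sym; auto.
Qed.


Lemma cc_trans V E (HU : undirected V E) a b u v x y :
  color_class V E a b u v -> color_class V E u v x y -> color_class V E a b x y.
Proof.
  intros [A|A] [B|B].
  - left. eapply gs_trans; eauto.
  - right. eapply gs_trans; eauto.
  - right. apply (gs_rev _ _ HU) in B. eapply gs_trans; eauto.
  - left. apply (gs_rev _ _ HU) in B. eapply gs_trans; eauto.
Qed.

Lemma cc_sym V E (HU : undirected V E) a b u v :
  color_class V E a b u v -> color_class V E u v a b.
Proof.
  intros [A|A].
  - left. apply gs_sym; auto.
  - right. apply (gs_rev _ _ HU). apply gs_sym; auto.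
Qed.

Lemma cc_swap V E (HU : undirected V E) a b x y :
  color_class V E a b x y -> color_class V E b a x y.
Proof.
  intros [A|A]; apply (gs_rev _ _ HU) in A; [right|left]; auto.
Qed.

Lemma mult_two V E (HU : undirected V E) s u v :
  In u s -> In v s -> u <> v -> (forall m, In m s -> m = u \/ m = v) ->
  forall x y, multiplex_of V E s x y <-> color_class V E u v x y.
Proof.
  intros Hu Hv Huv All x y. split.
  - intros [a [b [Ha [Hb [Hab C]]]]].
    destruct (All a Ha) as [->| ->]; destruct (All b Hb) as [->| ->]; try congruence; auto.
    apply cc_swap; auto.
  - intro C. exists u, v; auto.
Qed.

Lemma two_case V E (HU : undirected V E) s1 s2 (S1 : simplex V E s1) (S2 : simplex V E s2)
  u v : In u s1 -> In v s1 -> u <> v -> (forall m, In m s1 -> m = u \/ m = v) ->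
  spanF V E s1 -> spanF V E s2 ->
  forall x y, multiplex_of V E s1 x y <-> multiplex_of V E s2 x y.
Proof.
  intros Hu Hv Huv All Sp1 Sp2. pose proof HU as [Hi Hs].
  assert (SpB : forall z, exists w, CCl V E u v z w).
  { intro z. destruct (Sp1 z) as [a [b [w [Ha [Hb [Hab G]]]]]].
    destruct (All a Ha) as [->| ->]; destruct (All b Hb) as [->| ->]; try congruence.
    - exists w; left; auto.
    - exists w; right. apply (gs_rev _ _ HU) in G; auto. }
  destruct (step1 _ _ HU s2 S2 Sp2 u v SpB) as [a [b [Ha [Hb [Hab Cab]]]]].
  assert (All2 : forall m, In m s2 -> m = a \/ m = b).
  { intros m Hm. destruct (classic (m = a)); auto. destruct (classic (m = b)); auto. exfalso.
    destruct (SpB m) as [w Cw].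
    destruct (cc_trans _ _ HU a b u v m w Cab Cw) as [G|G].
    - destruct (TLS _ _ HU s2 S2 a b m m w) as [h _]; auto. eapply Hi; eauto.
    - destruct (TLS _ _ HU s2 S2 a b m w m) as [_ [h _]]; auto. eapply Hi; eauto. }
  intros x y. rewrite (mult_two _ _ HU s1 u v Hu Hv Huv All).
  rewrite (mult_two _ _ HU s2 a b Ha Hb Hab All2).
  split; intro C.
  - exact (cc_trans _ _ HU a b u v x y Cab C).
  - exact (cc_trans _ _ HU u v a b x y (cc_sym _ _ HU _ _ _ _ Cab) C).
Qed.

Lemma third_or_two V E s (S : simplex V E s) :
  third V s \/ exists u v, In u s /\ In v s /\ u <> v /\ (forall m, In m s -> m = u \/ m = v).
Proof.
  destruct (two_elems _ _ _ S) as [u [v [Hu [Hv Huv]]]].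
  destruct (classic (exists m, In m s /\ m <> u /\ m <> v)) as [[m [Hm [Hmu Hmv]]]|N].
  - left. intros a b Ha Hb.
    destruct (classic (u = a)); destruct (classic (u = b));
    destruct (classic (v = a)); destruct (classic (v = b)); subst;
    first [exists m; split; [auto|split; congruence]
          |exists u; split; [auto|split; congruence]
          |exists v; split; [auto|split; congruence]].
  - right. exists u, v. split; auto; split; auto; split; auto.
    intros m Hm. destruct (classic (m = u)); auto. destruct (classic (m = v)); auto.
    exfalso; apply N; exists m; auto.
Qed.

Theorem corollary4p6 (V : Type) (E : V -> V -> Prop) :
  undirected V E ->
  forall M1 M2 : V -> V -> Prop,
    is_multiplex V E M1 -> is_multiplex V E M2 ->
    (forall z, spanned V M1 z) -> (forall z, spanned V M2 z) ->
    forall x y, M1 x y <-> M2 x y.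
Proof.
  intros HU M1 M2 [s1 [S1 HM1]] [s2 [S2 HM2]] Sp1 Sp2 x y.
  pose proof (span_first _ _ HU s1 M1 HM1 Sp1) as F1.
  pose proof (span_first _ _ HU s2 M2 HM2 Sp2) as F2.
  rewrite HM1, HM2.
  destruct (third_or_two _ _ _ S1) as [T1|[u [v [Hu [Hv [Huv All]]]]]].
  - destruct (third_or_two _ _ _ S2) as [T2|[u [v [Hu [Hv [Huv All]]]]]].
    + rewrite (mchar _ _ HU s1 S1 T1 F1), (mchar _ _ HU s2 S2 T2 F2).
      split; intros [Exy N]; split; auto; intro Hs; apply N.
      * eapply (same_transfer _ _ HU s2 s1); eauto.
      * eapply (same_transfer _ _ HU s1 s2); eauto.
    + symmetry. apply (two_case _ _ HU s2 s1 S2 S1 u v); auto.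
  - apply (two_case _ _ HU s1 s2 S1 S2 u v); auto.
Qed.
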